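(* Let $X\in\mathbb{R}^{n\times D}$ and $Y\in\mathbb{R}^{n\times m}$ with $D>n\geq r:=\mathrm{rank}(X)$, and let $h\ge\min\{m,D\}$ be a positive integer. Write the compact SVD $X=W\begin{bmatrix}\Sigma_x^{1/2} & 0\end{bmatrix}\begin{bmatrix}\Phi_1^T\\ \Phi_2^T\end{bmatrix}$ with $W\in\mathbb{R}^{n\times r}$ having orthonormal columns, $\Sigma_x\in\mathbb{R}^{r\times r}$ diagonal with positive diagonal, $\Phi_1\in\mathbb{R}^{D\times r}$, $\Phi_2\in\mathbb{R}^{D\times(D-r)}$, $[\Phi_1\ \Phi_2]$ orthogonal. Let $E(V,U_1)=W^TY-\Sigma_x^{1/2}U_1V^T$ and let $(V(t),U_1(t),U_2(t))\in\mathbb{R}^{m\times h}\times\mathbb{R}^{r\times h}\times\mathbb{R}^{(D-r)\times h}$, $t\ge0$, solve $$\dot V=E^T\Sigma_x^{1/2}U_1,\qquad \dot U_1=\Sigma_x^{1/2}EV,\qquad \dot U_2=0,$$ with $E=E(V(t),U_1(t))$, starting from some $(V(0),U_1(0),U_2(0))$. Let $U(t)=\Phi_1U_1(t)+\Phi_2U_2(t)$. Assume that $(V(t),U_1(t))$ converges as $t\to\infty$ to some equilibrium point $(V(\infty),U_1(\infty))$ with $E(V(\infty),U_1(\infty))=0$, and set $U(\infty)=\Phi_1U_1(\infty)+\Phi_2U_2(0)$. If the initialization satisfies $$V(0)U_2(0)^T=0,\qquad U_1(0)U_2(0)^T=0,$$ then $U(\infty)V(\infty)^T=\hat\Theta$,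 where $\hat\Theta=X^T(XX^T)^\dagger Y$.
   Context: The dynamics above are the gradient flow of $\mathcal{L}(V,U)=\frac12\|Y-XUV^T\|_F^2$ written in coordinates $U=\Phi_1U_1+\Phi_2U_2$. $(\cdot)^\dagger$ denotes the Moore–Penrose pseudoinverse; $\hat\Theta$ is the minimum-norm solution of $\min_{\Theta}\|Y-X\Theta\|_F^2$. *)

(* Defs.v *)
(* R : realType, matrices 'M[R]_(m,n) carry the
   normed-module structure of matrix_normedtype (entrywise max norm). *)
From HB Require Import structures.
From mathcomp Require Import all_boot all_order all_algebra.
From mathcomp Require Import all_classical all_reals all_analysis.
Set Implicit Arguments. Unset Strict Implicit. Unset Printing Implicit Defensive.
Import Order.TTheory GRing.Theory Num.Theory.
Local Open Scope ring_scope.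

Definition penrose (R : realType) (n m : nat) (A : 'M[R]_(n, m)) (B : 'M[R]_(m, n)) : Prop :=
  [/\ A *m B *m A = A, B *m A *m B = B, (A *m B)^T = A *m B & (B *m A)^T = B *m A].

Definition mp_pinv (R : realType) (n m : nat) (A : 'M[R]_(n, m)) : 'M[R]_(m, n) :=
  xget 0 (penrose A).

Definition theta_hat (R : realType) (n D m : nat) (X : 'M[R]_(n, D)) (Y : 'M[R]_(n, m))
  : 'M[R]_(D, m) := X^T *m mp_pinv (X *m X^T) *m Y.

(* Main.v *)
Require Import Defs.
From HB Require Import structures.
From mathcomp Require Import all_boot all_order all_algebra.
From mathcomp Require Import all_classical all_reals all_analysis.
From mathcomp Require Import lra ring.
Import Order.TTheory GRing.Theory Num.Theory numFieldTopology.Exports numFieldNormedType.Exports.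
Local Open Scope classical_set_scope.
Local Open Scope ring_scope.

Section G.
Context {R : realType}.
Definition cont (g : R -> R) := {within [set t : R | 0 <= t], continuous g}.

Lemma gronwall0 (f df : R -> R) : cont f ->
  (forall t : R, 0 < t -> is_derive t (1:R) f (df t)) -> (forall t : R, 0 <= f t) -> f 0 = 0 ->
  (forall T : R, 0 < T -> exists C : R, 0 < C /\ forall t : R, 0 < t -> t <= T -> `|df t| <= C * f t) ->
  forall t : R, 0 <= t -> f t = 0.
Proof.
move=> cf df_ f0 f00 hb t; rewrite le_eqVlt => /orP[/eqP<-//|t0].
have [C [C0 hC]] := hb t t0.
set d := (2 * C)^-1.
have d0 : 0 < d by rewrite invr_gt0 mulr_gt0.
have key : forall k : nat, forall s, 0 <= s -> s <= t -> s <= k%:R * d -> f s = 0.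
  elim=> [|k IH] s s0 st.
    by rewrite mul0r => s0'; have -> : s = 0 by apply/le_anti; rewrite s0 s0'.
  move=> sk.
  have [sa|as_] := leP s (k%:R * d); first exact: IH.
  set a := k%:R * d in as_ *.
  have a0 : 0 <= a by rewrite mulr_ge0 // ltW.
  have fa : f a = 0 by apply: IH => //; rewrite (le_trans (ltW as_)).
  have sub : forall b, `[a, b] `<=` [set t : R | 0 <= t].
    by move=> b x /=; rewrite in_itv /= => /andP[ax _]; rewrite (le_trans a0).
  have [c cab cmax] := EVT_max (ltW as_) (continuous_subspaceW (sub s) cf).
  have fc0 : f c = 0.
    move: cab; rewrite in_itv /= => /andP[ac cs].
    move: ac; rewrite le_eqVlt => /orP[/eqP<-//|ac].
    have hd : forall x, x \in `]a, c[ -> is_derive x (1:R) f (df x).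
      move=> x; rewrite in_itv /= => /andP[ax _]; apply: df_.
      exact: le_lt_trans a0 ax.
    have [xi xiac] := MVT ac hd (continuous_subspaceW (sub c) cf).
    rewrite fa subr0 => fcE.
    move: xiac; rewrite in_itv /= => /andP[axi xic].
    have xi0 : 0 < xi by exact: le_lt_trans a0 axi.
    have xit : xi <= t by rewrite (le_trans (ltW xic)) // (le_trans cs).
    have h1 : f c <= C * f c * d.
      rewrite {1}fcE (le_trans (ler_norm _)) // normrM.
      apply: ler_pM => //.
      - rewrite (le_trans (hC _ xi0 xit)) // ler_wpM2l ?(ltW C0) //.
        by apply: cmax; rewrite in_itv /= (ltW axi) (le_trans (ltW xic)).
      - rewrite ger0_norm ?subr_ge0 ?(ltW ac) //.
        have sd : s <= a + d by move: sk; rewrite /a -natr1 mulrDl mul1r.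
        lra.
    have : C * f c * d = f c / 2.
      rewrite /d; field; rewrite ?gt_eqF // ?(C0) // ?pnatr_eq0 // ?mulf_neq0 // ?gt_eqF //.
    move=> e; rewrite e in h1.
    apply/le_anti; rewrite f0 andbT.
    have fc0 := f0 c.
    by rewrite -subr_ge0 in h1 *; nra.
  apply/le_anti; rewrite f0 andbT -fc0; apply: cmax.
  by rewrite in_itv /= (ltW as_) lexx.
have [k hk] : exists k : nat, t <= k%:R * d.
  exists (Num.bound (t / d)); rewrite -ler_pdivrMr //.
  by apply/ltW/archi_boundP; rewrite divr_ge0 // ltW.
by apply: (key k) => //; apply: ltW.
Qed.

Lemma cont_cst (c : R) : cont (fun _ => c).
Proof. move=> x; exact: cst_continuous. Qed.

Lemma cont_add {f g} : cont f -> cont g -> cont (fun t => f t + g t).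
Proof. by move=> hf hg x; apply: continuousD; [apply: hf|apply: hg]. Qed.

Lemma cont_opp {f} : cont f -> cont (fun t => - f t).
Proof. by move=> hf x; apply: continuousN; apply: hf. Qed.

Lemma cont_mul {f g} : cont f -> cont g -> cont (fun t => f t * g t).
Proof. by move=> hf hg x; apply: continuousM; [apply: hf|apply: hg]. Qed.

Lemma cont_sum n (g : 'I_n -> R -> R) : (forall i, cont (g i)) ->
  cont (fun t => \sum_(i < n) g i t).
Proof.
elim: n g => [|n IH] g hg.
  by under eq_fun do rewrite big_ord0; exact: cont_cst.
under eq_fun do rewrite big_ord_recr /=.
apply: cont_add; last exact: hg.
exact: (IH (fun i => g (widen_ord (leqnSn n) i))).
Qed.

Definition mcont {p q} (F : R -> 'M[R]_(p, q)) := forall i j, cont (fun t => F t i j).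

Lemma mcont_of {p q} {F : R -> 'M[R]_(p, q)} :
  {within [set t : R | 0 <= t], continuous F} -> mcont F.
Proof.
move=> hF i j x.
exact: (continuous_comp (hF x) (@coord_continuous _ _ _ i j (F x))).
Qed.

Lemma mcont_cst {p q} (M : 'M[R]_(p, q)) : mcont (fun _ => M).
Proof. by move=> i j; exact: cont_cst. Qed.

Lemma mcont_add {p q} {F G : R -> 'M[R]_(p, q)} : mcont F -> mcont G -> mcont (fun t => F t + G t).
Proof. by move=> hF hG i j; under eq_fun do rewrite mxE; exact: cont_add. Qed.

Lemma mcont_opp {p q} {F : R -> 'M[R]_(p, q)} : mcont F -> mcont (fun t => - F t).
Proof. by move=> hF i j; under eq_fun do rewrite mxE; exact: cont_opp. Qed.

Lemma mcont_tr {p q} {F : R -> 'M[R]_(p, q)} : mcont F -> mcont (fun t => (F t)^T).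
Proof. by move=> hF i j; under eq_fun do rewrite mxE; exact: hF. Qed.

Lemma mcont_mul {p q o} {F : R -> 'M[R]_(p, q)} {G : R -> 'M[R]_(q, o)} :
  mcont F -> mcont G -> mcont (fun t => F t *m G t).
Proof.
move=> hF hG i j; under eq_fun do rewrite mxE.
by apply: cont_sum => k; apply: cont_mul.
Qed.

Definition mder {p q} (F : R -> 'M[R]_(p, q)) (dF : 'M[R]_(p, q)) (t : R) :=
  forall i j, is_derive t (1:R) (fun s => F s i j) (dF i j).

Lemma mder_of {p q} {F : R -> 'M[R]_(p, q)} {dF t} : is_derive t (1:R) F dF -> mder F dF t.
Proof.
move=> h i j.
have dF1 : derivable F t 1 by exact: ex_derive.
have := derive_mx dF1; rewrite derive_val => ->; rewrite mxE.
by apply: derivableP; move/derivable_mxP: dF1; apply.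
Qed.

Lemma mder_mulr {p q o} {F : R -> 'M[R]_(p, q)} (N : 'M[R]_(q, o)) {dF t} :
  mder F dF t -> mder (fun s => F s *m N) (dF *m N) t.
Proof.
move=> h i j; under eq_fun do rewrite mxE; rewrite mxE.
rewrite -[X in is_derive _ _ X _]/(fun s => \sum_(k < q) (fun s => F s i k * N k j) s).
rewrite -fct_sumE; apply: is_derive_sum => k.
apply: is_derive_eq.
  exact: (is_deriveM (h i k) (is_derive_cst (N k j) t 1)).
by rewrite scaler0 add0r /GRing.scale /= mulrC.
Qed.

Lemma sq_sum_der {p q} {F : R -> 'M[R]_(p, q)} {dF t} : mder F dF t ->
  is_derive t (1:R) (fun s => \sum_i \sum_j F s i j ^+ 2)
     (\sum_i \sum_j 2 * F t i j * dF i j).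
Proof.
move=> h.
rewrite -[X in is_derive _ _ X _]/(fun s => \sum_(i < p) (fun s => \sum_j F s i j ^+ 2) s).
rewrite -fct_sumE; apply: is_derive_sum => i.
rewrite -[X in is_derive _ _ X _]/(fun s => \sum_(j < q) (fun s => F s i j ^+ 2) s).
rewrite -fct_sumE; apply: is_derive_sum => j.
apply: is_derive_eq.
  exact: (is_deriveX 2 (h i j)).
reflexivity.
Qed.

Lemma cont_sqsum {p q} {F : R -> 'M[R]_(p, q)} : mcont F ->
  cont (fun s => \sum_i \sum_j F s i j ^+ 2).
Proof.
move=> h; apply: cont_sum => i; apply: cont_sum => j.
under eq_fun do rewrite expr2; exact: cont_mul.
Qed.

Lemma sq_le_sum {p q} (F : 'M[R]_(p, q)) i k :
  F i k ^+ 2 <= \sum_i \sum_k F i k ^+ 2.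
Proof.
rewrite (bigD1 i) //= (bigD1 k) //= -addrA lerDl addr_ge0 //.
  by rewrite sumr_ge0 // => *; rewrite sqr_ge0.
by rewrite sumr_ge0 // => *; rewrite sumr_ge0 // => *; rewrite sqr_ge0.
Qed.

Lemma sqsum_ge0 {p q} (F : 'M[R]_(p, q)) : 0 <= \sum_i \sum_k F i k ^+ 2.
Proof. by rewrite sumr_ge0 // => *; rewrite sumr_ge0 // => *; rewrite sqr_ge0. Qed.

Lemma term_bound (x y z C F : R) : 0 <= C -> `|z| <= C -> x ^+ 2 <= F -> y ^+ 2 <= F ->
  `|2 * x * (z * y)| <= 2 * C * F.
Proof.
move=> C0 zC xF yF.
rewrite !normrM (@ger0_norm _ 2) //.
have hxy : `|x| * `|y| <= F.
  have : 2 * (`|x| * `|y|) <= `|x| ^+ 2 + `|y| ^+ 2.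
    have := sqr_ge0 (`|x| - `|y|); rewrite sqrrB; lra.
  rewrite !real_normK ?num_real //; lra.
have h1 : 0 <= `|x| * `|y| by rewrite mulr_ge0.
have h2 := normr_ge0 z.
nra.
Qed.

Lemma norm_sum_le {n} (g : 'I_n -> R) K : (forall i, `|g i| <= K) ->
  `|\sum_i g i| <= n%:R * K.
Proof.
move=> h; rewrite (le_trans (ler_norm_sum _ _ _)) //.
rewrite (le_trans (ler_sum _ (fun i _ => h i))) //.
by rewrite sumr_const card_ord mulr_natl.
Qed.

Lemma bound_lemma {a b c : nat} (P : 'M[R]_(a, b)) (A : 'M[R]_(a, c)) (B : 'M[R]_(b, c)) (C : R) :
  0 <= C -> (forall i j, `|P i j| <= C) ->
  `|\sum_i \sum_k 2 * A i k * (P *m B) i k + \sum_j \sum_k 2 * B j k * (P^T *m A) j k|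
   <= (4 * (a * b * c)%:R * C) * (\sum_i \sum_k A i k ^+ 2 + \sum_j \sum_k B j k ^+ 2).
Proof.
move=> C0 hP.
set F := (\sum_i \sum_k A i k ^+ 2 + \sum_j \sum_k B j k ^+ 2).
have FA : forall i k, A i k ^+ 2 <= F.
  by move=> i k; rewrite /F (le_trans (sq_le_sum A i k)) // lerDl sqsum_ge0.
have FB : forall i k, B i k ^+ 2 <= F.
  by move=> i k; rewrite /F (le_trans (sq_le_sum B i k)) // lerDr sqsum_ge0.
have s1 : `|\sum_i \sum_k 2 * A i k * (P *m B) i k| <= a%:R * (c%:R * (b%:R * (2 * C * F))).
  apply: norm_sum_le => i; apply: norm_sum_le => k.
  rewrite mxE mulr_sumr; apply: norm_sum_le => j.
  exact: term_bound.
have s2 : `|\sum_j \sum_k 2 * B j k * (P^T *m A) j k| <= b%:R * (c%:R * (a%:R * (2 * C * F))).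
  apply: norm_sum_le => j; apply: norm_sum_le => k.
  rewrite mxE mulr_sumr; apply: norm_sum_le => i.
  rewrite mxE; exact: term_bound.
rewrite (le_trans (ler_normD _ _)) // (le_trans (lerD s1 s2)) //.
rewrite !natrM le_eqVlt; apply/orP; left; apply/eqP; ring.
Qed.

Lemma cvg_sumR {T : Type} (F : set_system T) {FF : Filter F} {n} (h : 'I_n -> T -> R) (l : 'I_n -> R) :
  (forall i, h i t @[t --> F] --> l i) -> (\sum_i h i t) @[t --> F] --> \sum_i l i.
Proof.
elim: n h l => [|n IH] h l hl.
  rewrite big_ord0; under eq_fun do rewrite big_ord0; exact: cvg_cst.
rewrite big_ord_recr /=; under eq_fun do rewrite big_ord_recr /=.
apply: cvgD; last exact: hl.
exact: (IH (fun i => h (widen_ord (leqnSn n) i))).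
Qed.

Lemma cvg_entry {T : Type} (F : set_system T) {FF : Filter F} {p q} (M : T -> 'M[R]_(p, q)) (L : 'M[R]_(p, q)) i j :
  M t @[t --> F] --> L -> M t i j @[t --> F] --> L i j.
Proof. by move=> h; apply: (continuous_cvg _ (@coord_continuous _ _ _ i j L)). Qed.

End G.

Lemma penrose_uniq (R : realType) n m (A : 'M[R]_(n, m)) B1 B2 :
  penrose A B1 -> penrose A B2 -> B1 = B2.
Proof.
move=> [h11 h12 h13 h14] [h21 h22 h23 h24].
have e1 : A^T = A^T *m A *m B2.
  by rewrite -{1}h21 trmx_mul h23 mulmxA.
have e2 : A^T = B1 *m A *m A^T.
  by rewrite -{1}h11 -mulmxA trmx_mul h14.
have k1 : B1 = B1 *m A *m B2.
  transitivity (B1 *m (A *m B1)^T); first by rewrite h13 mulmxA h12.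
  transitivity (B1 *m B1^T *m A^T); first by rewrite trmx_mul mulmxA.
  transitivity (B1 *m B1^T *m (A^T *m A *m B2)); first by rewrite -e1.
  transitivity (B1 *m (A *m B1)^T *m A *m B2); first by rewrite trmx_mul !mulmxA.
  by rewrite h13 !mulmxA h12.
have k2 : B2 = B1 *m A *m B2.
  transitivity ((B2 *m A)^T *m B2); first by rewrite h24 h22.
  transitivity (A^T *m B2^T *m B2); first by rewrite trmx_mul.
  transitivity (B1 *m A *m A^T *m B2^T *m B2); first by rewrite -e2.
  transitivity (B1 *m A *m (B2 *m A)^T *m B2); first by rewrite trmx_mul !mulmxA.
  by rewrite h24 -!mulmxA [B2 *m (A *m B2)]mulmxA h22.
by rewrite k1 -k2.
Qed.

Lemma mp_pinvE (R : realType) n m (A : 'M[R]_(n, m)) B : penrose A B -> mp_pinv A = B.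
Proof.
move=> h; apply: (@penrose_uniq _ _ _ A) => //.
by apply: xgetPex; exists B.
Qed.

Theorem proposition1 (R : realType) (n D m h r : nat)
  (X : 'M[R]_(n, D)) (Y : 'M[R]_(n, m))
  (W : 'M[R]_(n, r)) (sx : 'rV[R]_r)
  (Phi1 : 'M[R]_(D, r)) (Phi2 : 'M[R]_(D, D - r))
  (V : R -> 'M[R]_(m, h)) (U1 : R -> 'M[R]_(r, h)) (U2 : R -> 'M[R]_(D - r, h))
  (Vinf : 'M[R]_(m, h)) (U1inf : 'M[R]_(r, h)) :
  (n < D)%N -> r = \rank X -> (minn m D <= h)%N -> (0 < h)%N ->
  (* compact SVD  X = W [Sigma_x^{1/2} 0] [Phi1 Phi2]^T *)
  W^T *m W = 1%:M ->
  (forall i, 0 < sx 0 i) ->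
  let Sh := diag_mx (map_mx Num.sqrt sx) in
  (row_mx Phi1 Phi2)^T *m row_mx Phi1 Phi2 = 1%:M ->
  row_mx Phi1 Phi2 *m (row_mx Phi1 Phi2)^T = 1%:M ->
  X = W *m row_mx Sh (0 : 'M[R]_(r, D - r)) *m col_mx Phi1^T Phi2^T ->
  let E (Va : 'M[R]_(m, h)) (Ua : 'M[R]_(r, h)) : 'M[R]_(r, m) :=
    W^T *m Y - Sh *m Ua *m Va^T in
  (* the gradient-flow dynamics on t >= 0 *)
  {within [set t : R | 0 <= t], continuous V} ->
  {within [set t : R | 0 <= t], continuous U1} ->
  {within [set t : R | 0 <= t], continuous U2} ->
  (forall t : R, 0 < t -> is_derive t (1 : R) V ((E (V t) (U1 t))^T *m Sh *m U1 t)) ->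
  (forall t : R, 0 < t -> is_derive t (1 : R) U1 (Sh *m E (V t) (U1 t) *m V t)) ->
  (forall t : R, 0 < t -> is_derive t (1 : R) U2 0) ->
  (* convergence to an equilibrium *)
  V t @[t --> +oo] --> Vinf ->
  U1 t @[t --> +oo] --> U1inf ->
  E Vinf U1inf = 0 ->
  (* initialization *)
  V 0 *m (U2 0)^T = 0 ->
  U1 0 *m (U2 0)^T = 0 ->
  let Uinf := Phi1 *m U1inf + Phi2 *m U2 0 in
  Uinf *m Vinf^T = theta_hat X Y.
Proof.
move=> nD hr hh hh0 hW hsx Sh hP1 hP2 hX E cV cU1 cU2 dV dU1 dU2 lV lU1 hE0 i1 i2 Uinf.
set N := (U2 0)^T.
have ShT : Sh^T = Sh by rewrite tr_diag_mx.
have key : Vinf *m N = 0.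
  pose A s := V s *m N.
  pose B s := U1 s *m N.
  pose f s := \sum_i \sum_k A s i k ^+ 2 + \sum_j \sum_k B s j k ^+ 2.
  pose P s := (E (V s) (U1 s))^T *m Sh.
  pose df s := \sum_i \sum_k 2 * A s i k * (P s *m B s) i k
             + \sum_j \sum_k 2 * B s j k * ((P s)^T *m A s) j k.
  have mA : mcont A := mcont_mul (mcont_of cV) (mcont_cst N).
  have mB : mcont B := mcont_mul (mcont_of cU1) (mcont_cst N).
  have mP : mcont P.
    rewrite /P /E; apply: mcont_mul (mcont_cst _); apply: mcont_tr.
    apply: mcont_add (mcont_cst _) _; apply: mcont_opp.
    apply: mcont_mul; first exact: mcont_mul (mcont_cst _) (mcont_of cU1).
    exact: mcont_tr (mcont_of cV).
  have cf : cont f := cont_add (cont_sqsum mA) (cont_sqsum mB).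
  have hd : forall t : R, 0 < t -> is_derive t (1:R) f (df t).
    move=> t t0.
    have hA := mder_mulr N (mder_of (dV t t0)).
    have hB := mder_mulr N (mder_of (dU1 t t0)).
    have e1 : (E (V t) (U1 t))^T *m Sh *m U1 t *m N = P t *m B t.
      by rewrite /P /B mulmxA.
    have e2 : Sh *m E (V t) (U1 t) *m V t *m N = (P t)^T *m A t.
      by rewrite /P /A trmx_mul ShT trmxK !mulmxA.
    rewrite e1 in hA; rewrite e2 in hB.
    exact: (is_deriveD (sq_sum_der hA) (sq_sum_der hB)).
  have f0 : forall t : R, 0 <= f t by move=> t; rewrite addr_ge0 // sqsum_ge0.
  have f00 : f 0 = 0.
    rewrite /f /A /B -/N i1 i2.
    by rewrite !big1 ?addr0 // => *; rewrite big1 // => *; rewrite mxE expr0n.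
  have hb : forall T : R, 0 < T -> exists C : R, 0 < C /\
      forall t : R, 0 < t -> t <= T -> `|df t| <= C * f t.
    move=> T T0.
    pose g s := \sum_i \sum_j P s i j ^+ 2.
    have sub : `[0, T] `<=` [set t : R | 0 <= t].
      by move=> x /=; rewrite in_itv /= => /andP[].
    have [c cT cmax] := EVT_max (ltW T0) (continuous_subspaceW sub (cont_sqsum mP)).
    set C := 1 + g c.
    have C0 : 0 <= C by rewrite addr_ge0 // sqsum_ge0.
    exists (4 * (m * r * (D - r))%:R * C + 1); split.
      by rewrite ltr_pwDr // mulr_ge0 // mulr_ge0.
    move=> t t0 tT.
    have hP : forall i j, `|P t i j| <= C.
      move=> i j; rewrite /C (le_trans _ (lerD (lexx 1) (cmax t _))) //; last first.
        by rewrite in_itv /= tT ltW.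
      rewrite (le_trans _ (lerD (lexx 1) (sq_le_sum (P t) i j))) //.
      have := sqr_ge0 (`|P t i j| - 1); rewrite sqrrB real_normK ?num_real //.
      have := normr_ge0 (P t i j); nra.
    rewrite (le_trans (bound_lemma (P t) (A t) (B t) C C0 hP)) //.
    by rewrite ler_wpM2r ?f0 // lerDl.
  have fz := gronwall0 f df cf hd f0 f00 hb.
  have Az : forall t : R, 0 <= t -> forall i k, A t i k = 0.
    move=> t t0 i k; apply/eqP; rewrite -sqrf_eq0 eq_le sqr_ge0 andbT -(fz t t0).
    by rewrite /f (le_trans (sq_le_sum (A t) i k)) // lerDl sqsum_ge0.
  apply/matrixP => i k; rewrite [RHS]mxE.
  have l1 : A t i k @[t --> +oo] --> (Vinf *m N) i k.
    rewrite /A; under eq_fun do rewrite mxE; rewrite mxE.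
    apply: cvg_sumR => l; apply: cvgMl; exact: cvg_entry.
  have l2 : A t i k @[t --> +oo] --> (0:R).
    apply: cvg_near_cst; exists 0; split; first exact: real0.
    by move=> x x0; apply: Az; apply: ltW.
  exact: (cvg_unique _ l1 l2).
pose Si := diag_mx (map_mx (fun x => (Num.sqrt x)^-1) sx).
have sq0 : forall j, Num.sqrt (sx 0 j) != 0.
  by move=> j; rewrite gt_eqF // sqrtr_gt0.
have ShSi : forall p (M : 'M[R]_(r, p)), Sh *m (Si *m M) = M.
  move=> p M; rewrite mulmxA mul_diag_mx.
  rewrite (_ : \matrix_(i, j) _ = 1%:M) ?mul1mx //.
  apply/matrixP => i j; rewrite !mxE; case: eqP => [->|_].
    by rewrite !mulr1n mulfV.
  by rewrite !mulr0n mulr0.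
have SiSh : forall p (M : 'M[R]_(r, p)), Si *m (Sh *m M) = M.
  move=> p M; rewrite mulmxA mul_diag_mx.
  rewrite (_ : \matrix_(i, j) _ = 1%:M) ?mul1mx //.
  apply/matrixP => i j; rewrite !mxE; case: eqP => [->|_].
    by rewrite !mulr1n mulVf.
  by rewrite !mulr0n mulr0.
have SiT : Si^T = Si by rewrite tr_diag_mx.
have hW' : forall p (M : 'M[R]_(r, p)), W^T *m (W *m M) = M.
  by move=> p M; rewrite mulmxA hW mul1mx.
have hPhi : Phi1^T *m Phi1 = 1%:M.
  move: hP1; rewrite tr_row_mx mul_col_row scalar_mx_block.
  by case/eq_block_mx.
have hPhi' : forall p (M : 'M[R]_(r, p)), Phi1^T *m (Phi1 *m M) = M.
  by move=> p M; rewrite mulmxA hPhi mul1mx.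
have hX' : X = W *m (Sh *m Phi1^T).
  by rewrite hX -mulmxA mul_row_col mul0mx addr0.
pose G := W *m (Si *m (Si *m W^T)).
have XXt : X *m X^T = W *m (Sh *m (Sh *m W^T)).
  by rewrite hX' !trmx_mul trmxK ShT -!mulmxA hPhi'.
have pen : penrose (X *m X^T) G.
  rewrite XXt /G; split; rewrite -!mulmxA !hW' ?ShSi ?ShSi ?SiSh ?SiSh //.
  1,2: by rewrite trmx_mul trmxK.
rewrite /theta_hat (@mp_pinvE _ _ _ _ _ pen) /G hX' /Uinf.
have e1 : U1inf *m Vinf^T = Si *m (W^T *m Y).
  move/eqP: hE0; rewrite /E subr_eq0 => /eqP ->.
  by rewrite -[Sh *m U1inf *m _]mulmxA SiSh.
have e2 : U2 0 *m Vinf^T = 0.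
  by rewrite -[U2 0]trmxK -trmx_mul -/N key trmx0.
rewrite mulmxDl -!mulmxA e1 e2 mulmx0 addr0.
by rewrite !trmx_mul trmxK ShT -!mulmxA hW' ShSi.
Qed.
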